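(* Let $\mu$ be a Borel probability measure on $[0,1]$ and let $(v_k)_{k=1}^M\subseteq[0,1]$ with $M\in\mathbb{N}\cup\{\infty\}$. Then there exists $(x_k)_{k=1}^M\subseteq[0,1]$ such that for all integers $2\leq N\leq M$, $$D^*_N\Big(\mu;\tfrac1N\textstyle\sum_{i=1}^N\delta_{x_i}\Big)\leq D^*_N\Big(\lambda_1;\tfrac1N\textstyle\sum_{i=1}^N\delta_{v_i}\Big).$$ Moreover, if $\mu$ has no point masses (i.e. $\mu(\{x\})=0$ for every $x\in[0,1]$), then equality holds for all such $N$.
   Context: $\lambda_1$ is Lebesgue measure on $[0,1]$ and $\delta_y$ the Dirac measure at $y$. For probability measures $\mu,\nu$ on $[0,1]$, the star-discrepancy is $D^*_N(\mu;\nu)=\sup_{b\in[0,1]}|\mu([0,b))-\nu([0,b))|$ (supremum over half-open intervals anchored at $0$). *)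

(* Defs.v *)
From Stdlib Require Import Reals Lra.
Open Scope R_scope.

Inductive borel : (R -> Prop) -> Prop :=
| borel_interval (a b : R) : borel (fun x => a < x < b)
| borel_compl (A : R -> Prop) : borel A -> borel (fun x => ~ A x)
| borel_union (A : nat -> R -> Prop) :
    (forall n, borel (A n)) -> borel (fun x => exists n, A n x).

(* A Borel probability measure on [0,1], represented as a countably additive
   nonnegative set function on the Borel sets of R concentrated on [0,1]. *)
Record borel_prob_01 (mu : (R -> Prop) -> R) : Prop := {
  bp_nonneg : forall A, borel A -> 0 <= mu A;
  bp_empty : mu (fun _ => False) = 0;
  bp_sigma_add : forall A : nat -> R -> Prop,
      (forall n, borel (A n)) ->
      (forall m n x, m <> n -> A m x -> A n x -> False) ->
      infinite_sum (fun n => mu (A n)) (mu (fun x => exists n, A n x));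
  bp_total : mu (fun x => 0 <= x <= 1) = 1;
  bp_support : mu (fun x => ~ (0 <= x <= 1)) = 0 }.

Definition no_point_masses (mu : (R -> Prop) -> R) : Prop :=
  forall x, 0 <= x <= 1 -> mu (fun t => t = x) = 0.

Definition Ico0 (b : R) : R -> Prop := fun t => 0 <= t < b.

(* Lebesgue measure lambda_1 of [0,b), for b in [0,1]. *)
Definition lambda1_Ico0 (b : R) : R := b.

Fixpoint count_Ico0 (x : nat -> R) (b : R) (n : nat) : R :=
  match n with
  | O => 0
  | S m => count_Ico0 x b m +
           (if Rle_dec 0 (x (S m)) then (if Rlt_dec (x (S m)) b then 1 else 0) else 0)
  end.

(* (1/N) sum_{i=1}^N delta_{x_i} evaluated on [0,b). *)
Definition empirical_Ico0 (x : nat -> R) (N : nat) (b : R) : R :=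
  / INR N * count_Ico0 x b N.

(* d is the star discrepancy sup_{b in [0,1]} |F b - G b| between two measures,
   given through their values F b, G b on [0,b). *)
Definition is_star_discrepancy (F G : R -> R) (d : R) : Prop :=
  is_lub (fun r => exists b, 0 <= b <= 1 /\ r = Rabs (F b - G b)) d.

(* M in N u {infinity}: None = infinity. *)
Definition le_ext (N : nat) (M : option nat) : Prop :=
  match M with None => True | Some m => (N <= m)%nat end.

Definition in_index_range (k : nat) (M : option nat) : Prop :=
  (1 <= k)%nat /\ le_ext k M.

(* Main.v *)
Require Import Defs.
From Stdlib Require Import Reals Lra Lia Classical FunctionalExtensionality PropExtensionality.
Open Scope R_scope.

Lemma set_ext (A B : R -> Prop) : (forall x, A x <-> B x) -> A = B.
Proof. intros H; apply functional_extensionality; intro x; apply propositional_extensionality; auto. Qed.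

Lemma borel_ext (A B : R -> Prop) : (forall x, A x <-> B x) -> borel A -> borel B.
Proof. intros H; rewrite (set_ext A B H); auto. Qed.

Lemma borel_empty : borel (fun _ => False).
Proof. apply (borel_ext (fun x => 0 < x < 0)); [intro; split; [lra|tauto]|constructor]. Qed.

Lemma borel_compl' A : borel A -> borel (fun x => ~ A x).
Proof. apply borel_compl. Qed.

Lemma borel_union2 A B : borel A -> borel B -> borel (fun x => A x \/ B x).
Proof.
  intros HA HB.
  apply (borel_ext (fun x => exists n, (match n with O => A | _ => B end) x)).
  - intro x; split; [intros [[|n] H]; auto | intros [H|H]; [exists O|exists 1%nat]; auto].
  - constructor; intros [|n]; auto.
Qed.

Lemma borel_inter A B : borel A -> borel B -> borel (fun x => A x /\ B x).
Proof.
  intros HA HB.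
  apply (borel_ext (fun x => ~ ((~ A x) \/ (~ B x)))).
  - intro x; split; [intro H; split; apply NNPP; tauto | tauto].
  - apply borel_compl, borel_union2; apply borel_compl; auto.
Qed.

Lemma arch_div (b d : R) : 0 < d -> exists n, b / (INR n + 1) < d.
Proof.
  intros Hd. destruct (INR_archimed d b Hd) as [n Hn]. exists n.
  assert (Hp : 0 < INR n + 1) by (pose proof (pos_INR n); lra).
  apply (Rmult_lt_reg_r (INR n + 1)); auto.
  unfold Rdiv; rewrite Rmult_assoc, Rinv_l by lra. nra.
Qed.

Lemma borel_lt a : borel (fun x => x < a).
Proof.
  apply (borel_ext (fun x => exists n, a - (INR n + 1) < x < a)).
  - intro x; split; [intros [n H]; lra|].
    intro H. destruct (INR_archimed 1 (a - x)) as [n Hn]; [lra|].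
    exists n; lra.
  - constructor; intro n; constructor.
Qed.

Lemma borel_gt a : borel (fun x => a < x).
Proof.
  apply (borel_ext (fun x => exists n, a < x < a + (INR n + 1))).
  - intro x; split; [intros [n H]; lra|].
    intro H. destruct (INR_archimed 1 (x - a)) as [n Hn]; [lra|].
    exists n; lra.
  - constructor; intro n; constructor.
Qed.

Lemma borel_ge a : borel (fun x => a <= x).
Proof. apply (borel_ext (fun x => ~ x < a)); [intro; lra| apply borel_compl, borel_lt]. Qed.
Lemma borel_le a : borel (fun x => x <= a).
Proof. apply (borel_ext (fun x => ~ a < x)); [intro; lra| apply borel_compl, borel_gt]. Qed.

Lemma borel_Ico a b : borel (fun x => a <= x < b).
Proof. apply borel_inter; [apply borel_ge|apply borel_lt]. Qed.
Lemma borel_Icc a b : borel (fun x => a <= x <= b).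
Proof. apply borel_inter; [apply borel_ge|apply borel_le]. Qed.
Lemma borel_Ico0 b : borel (Ico0 b).
Proof. apply borel_Ico. Qed.
Lemma borel_pt a : borel (fun t => t = a).
Proof. apply (borel_ext (fun x => a <= x <= a)); [intro; lra| apply borel_Icc]. Qed.

Section M.
Variable mu : (R -> Prop) -> R.
Hypothesis Hmu : borel_prob_01 mu.

Lemma mu_ext A B : (forall x, A x <-> B x) -> mu A = mu B.
Proof. intro H; rewrite (set_ext A B H); auto. Qed.

Lemma mu_add2 A B : borel A -> borel B -> (forall x, A x -> B x -> False) ->
  mu (fun x => A x \/ B x) = mu A + mu B.
Proof.
  intros HA HB Hd.
  set (S := fun n => match n with O => A | 1%nat => B | _ => fun _ : R => False end).
  assert (H := bp_sigma_add mu Hmu S).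
  assert (Hs : infinite_sum (fun n => mu (S n)) (mu (fun x => A x \/ B x))).
  { rewrite (mu_ext (fun x => A x \/ B x) (fun x => exists n, S n x)).
    - apply H.
      + intros [|[|n]]; simpl; auto using borel_empty.
      + intros [|[|m]] [|[|n]] x Hmn; simpl; try tauto; try lia; eauto.
    - intro x; split.
      + intros [Ha|Hb]; [exists O|exists 1%nat]; auto.
      + intros [[|[|n]] Hn]; simpl in Hn; tauto. }
  apply (uniqueness_sum _ _ _ Hs).
  intros eps Heps. exists 1%nat. intros n Hn.
  assert (E : sum_f_R0 (fun n => mu (S n)) n = mu A + mu B).
  { induction n as [|n IH]; [lia|].
    destruct n as [|n]; [simpl; auto|].
    simpl sum_f_R0 in *. rewrite IH by lia. simpl. rewrite (bp_empty mu Hmu). lra. }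
  rewrite E; unfold Rdist; rewrite Rminus_diag, Rabs_R0; lra.
Qed.

Lemma mu_nonneg A : borel A -> 0 <= mu A.
Proof. apply (bp_nonneg mu Hmu). Qed.

Lemma mu_mono A B : borel A -> borel B -> (forall x, A x -> B x) -> mu A <= mu B.
Proof.
  intros HA HB Hs.
  rewrite (mu_ext B (fun x => A x \/ (B x /\ ~ A x))).
  - rewrite mu_add2; auto.
    + pose proof (mu_nonneg (fun x => B x /\ ~ A x)). assert (0 <= mu (fun x => B x /\ ~ A x)).
      { apply mu_nonneg, borel_inter; auto using borel_compl. } lra.
    + apply borel_inter; auto using borel_compl.
    + tauto.
  - intro x; split; [intro; destruct (classic (A x)); tauto| intros [H|H]; [auto|tauto]].
Qed.

Lemma mu_full : mu (fun _ => True) = 1.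
Proof.
  rewrite (mu_ext _ (fun x => (0 <= x <= 1) \/ ~ (0 <= x <= 1))).
  - rewrite mu_add2; auto using borel_Icc, borel_compl.
    rewrite (bp_total mu Hmu), (bp_support mu Hmu); lra.
  - intro x; split; auto; intros _; apply classic.
Qed.

Lemma mu_compl A : borel A -> mu (fun x => ~ A x) = 1 - mu A.
Proof.
  intro HA. rewrite <- mu_full.
  rewrite (mu_ext (fun _ => True) (fun x => A x \/ ~ A x)).
  - rewrite mu_add2; auto using borel_compl. lra.
  - intro x; split; auto; intros _; apply classic.
Qed.

Lemma cont_below (B : nat -> R -> Prop) :
  (forall n, borel (B n)) -> (forall n x, B n x -> B (S n) x) ->
  forall eps, 0 < eps -> exists N, mu (fun x => exists n, B n x) - eps < mu (B N).
Proof.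
  intros HB Hinc eps Heps.
  assert (Hmon : forall m n x, (m <= n)%nat -> B m x -> B n x).
  { intros m n x Hmn; induction Hmn; auto. }
  set (A := fun n => match n with O => B O | S k => fun x => B (S k) x /\ ~ B k x end).
  assert (HAb : forall n, borel (A n)).
  { intros [|n]; simpl; auto. apply borel_inter; auto using borel_compl. }
  assert (HAs : forall n x, A n x -> B n x). { intros [|n] x; simpl; tauto. }
  assert (Hs := bp_sigma_add mu Hmu A HAb).
  assert (Hdisj : forall m n x, m <> n -> A m x -> A n x -> False).
  { assert (K : forall m n x, (m < n)%nat -> A m x -> A n x -> False).
    { intros m [|n] x Hmn Hm Hn; [lia|]. simpl in Hn. destruct Hn as [_ Hn].
      apply Hn. apply (Hmon m); [lia|]; auto. }
    intros m n x Hmn Hm Hn. destruct (Nat.lt_total m n) as [h|[h|h]]; eauto. }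
  specialize (Hs Hdisj).
  rewrite (mu_ext (fun x => exists n, B n x) (fun x => exists n, A n x)).
  2:{ intro x; split.
      - intros [m Hm]. induction m as [|m IH]; [exists O; auto|].
        destruct (classic (B m x)) as [h|h]; auto. exists (S m); simpl; auto.
      - intros [n Hn]; exists n; auto. }
  destruct (Hs eps Heps) as [N HN]. exists N.
  assert (E : forall n, sum_f_R0 (fun n => mu (A n)) n = mu (B n)).
  { induction n as [|n IH]; simpl; auto.
    rewrite IH. rewrite <- mu_add2; auto.
    - apply mu_ext; intro x; split; [intros [h|h]; [apply Hinc; auto|simpl in h; tauto]|].
      intro h; destruct (classic (B n x)); tauto.
    - apply borel_inter; auto using borel_compl.
    - tauto. }
  specialize (HN N (le_n N)). rewrite E in HN. unfold Rdist in HN.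
  apply Rabs_def2 in HN. lra.
Qed.

Definition G b := mu (Ico0 b).

Lemma G_nonneg b : 0 <= G b.
Proof. apply mu_nonneg, borel_Ico0. Qed.
Lemma G_mono t s : t <= s -> G t <= G s.
Proof. intro; apply mu_mono; try apply borel_Ico0. unfold Ico0; intros; lra. Qed.
Lemma G0 : G 0 = 0.
Proof. unfold G. rewrite (mu_ext _ (fun _ => False)); [apply (bp_empty mu Hmu)|]. unfold Ico0; intro x; split; [intros [h1 h2]; lra|tauto]. Qed.
Lemma G_le1 b : b <= 1 -> G b <= 1.
Proof.
  intro. rewrite <- (bp_total mu Hmu). apply mu_mono; auto using borel_Ico0, borel_Icc.
  unfold Ico0; intros; lra.
Qed.

Lemma G_lc b eps : 0 < b -> 0 < eps -> exists t, 0 <= t < b /\ G b - eps < G t.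
Proof.
  intros Hb He.
  set (t := fun n => b - b / (INR n + 1)).
  assert (Ht : forall n, 0 <= t n < b).
  { intro n. unfold t. assert (1 <= INR n + 1) by (pose proof (pos_INR n); lra).
    split.
    - assert (b / (INR n + 1) <= b).
      { unfold Rdiv. rewrite <- (Rmult_1_r b) at 2. apply Rmult_le_compat_l; [lra|].
        rewrite <- Rinv_1. apply Rinv_le_contravar; lra. } lra.
    - assert (0 < b / (INR n + 1)) by (apply Rdiv_lt_0_compat; lra). lra. }
  destruct (cont_below (fun n => Ico0 (t n)) (fun n => borel_Ico0 _)) with (eps := eps)
    as [N HN]; auto.
  - intros n x. unfold Ico0, t. rewrite S_INR. intros [h1 h2]. split; auto.
    assert (b / (INR n + 1 + 1) <= b / (INR n + 1)); [|lra].
    pose proof (pos_INR n). unfold Rdiv. apply Rmult_le_compat_l; [lra|].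
    apply Rinv_le_contravar; lra.
  - exists (t N). split; auto. unfold G.
    rewrite (mu_ext (Ico0 b) (fun x => exists n, Ico0 (t n) x)); auto.
    intro x; unfold Ico0; split.
    + intros [h1 h2]. destruct (arch_div b (b - x)) as [n Hn]; [lra|].
      exists n; unfold t; lra.
    + intros [n [h1 h2]]. specialize (Ht n). lra.
Qed.

Lemma G_rc b eps : no_point_masses mu -> 0 <= b < 1 -> 0 < eps ->
  exists t, b < t <= 1 /\ G t < G b + eps.
Proof.
  intros Hnp Hb He.
  set (t := fun n => b + (1 - b) / (INR n + 1)).
  assert (Ht : forall n, b < t n <= 1).
  { intro n. unfold t. assert (1 <= INR n + 1) by (pose proof (pos_INR n); lra).
    split.
    - assert (0 < (1 - b) / (INR n + 1)) by (apply Rdiv_lt_0_compat; lra). lra.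
    - assert ((1 - b) / (INR n + 1) <= 1 - b).
      { unfold Rdiv. rewrite <- (Rmult_1_r (1 - b)) at 2. apply Rmult_le_compat_l; [lra|].
        rewrite <- Rinv_1. apply Rinv_le_contravar; lra. } lra. }
  destruct (cont_below (fun n => fun x => ~ Ico0 (t n) x)
      (fun n => borel_compl _ (borel_Ico0 _))) with (eps := eps) as [N HN]; auto.
  - intros n x. unfold Ico0, t. rewrite S_INR. intros h1 h2. apply h1. split; [lra|].
    assert ((1 - b) / (INR n + 1 + 1) <= (1 - b) / (INR n + 1)); [|lra].
    pose proof (pos_INR n). unfold Rdiv. apply Rmult_le_compat_l; [lra|].
    apply Rinv_le_contravar; lra.
  - exists (t N). split; auto.
    rewrite mu_compl in HN by apply borel_Ico0.
    rewrite (mu_ext _ (fun x => ~ (0 <= x <= b))) in HN.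
    2:{ intro x; unfold Ico0; split.
        - intros [n Hn] h. apply Hn. specialize (Ht n). lra.
        - intro h. destruct (Rlt_dec x 0) as [h0|h0].
          + exists O; lra.
          + destruct (arch_div (1 - b) (x - b)) as [n Hn]; [lra|].
            exists n; unfold t; lra. }
    rewrite mu_compl in HN by apply borel_Icc.
    rewrite (mu_ext _ (fun x => Ico0 b x \/ x = b)) in HN.
    2:{ intro x; unfold Ico0; lra. }
    rewrite mu_add2 in HN; auto using borel_Ico0, borel_pt.
    2:{ unfold Ico0; intros; lra. }
    rewrite (Hnp b) in HN by lra. unfold G. lra.
Qed.

Definition Sset v := fun t => 0 <= t <= 1 /\ (t = 0 \/ G t <= v).
Lemma S_bound v : bound (Sset v).
Proof. exists 1. intros t [h _]; lra. Qed.
Lemma S_ne v : exists x, Sset v x.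
Proof. exists 0. split; [lra|auto]. Qed.
Definition Q v := proj1_sig (completeness (Sset v) (S_bound v) (S_ne v)).
Lemma Q_lub v : is_lub (Sset v) (Q v).
Proof. unfold Q; destruct completeness; auto. Qed.
Lemma Q_range v : 0 <= Q v <= 1.
Proof.
  destruct (Q_lub v) as [H1 H2]. split.
  - apply H1. split; [lra|auto].
  - apply H2. intros t [h _]; lra.
Qed.

Lemma Q_key v b : 0 <= v -> 0 <= b <= 1 -> (Q v < b <-> v < G b).
Proof.
  intros Hv Hb. destruct (Q_lub v) as [H1 H2]. split.
  - intro h. destruct (Rlt_or_le v (G b)) as [h'|h']; auto.
    assert (b <= Q v) by (apply H1; split; auto). lra.
  - intro h. destruct (Req_dec b 0) as [e|ne].
    { subst b. rewrite G0 in h. lra. }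
    destruct (G_lc b (G b - v)) as [t [Ht1 Ht2]]; try lra.
    assert (Q v <= t); [|lra].
    apply H2. intros s [Hs1 [Hs2|Hs2]]; [lra|].
    destruct (Rle_or_lt s t) as [l|l]; auto.
    pose proof (G_mono t s (Rlt_le _ _ l)). lra.
Qed.

Lemma G1 : no_point_masses mu -> G 1 = 1.
Proof.
  intro Hnp. transitivity (mu (fun x => 0 <= x <= 1)); [|apply (bp_total mu Hmu)].
  rewrite (mu_ext (fun x => 0 <= x <= 1) (fun x => Ico0 1 x \/ x = 1)).
  2:{ intro x; unfold Ico0; lra. }
  rewrite mu_add2; auto using borel_Ico0, borel_pt.
  - rewrite (Hnp 1) by lra. unfold G; ring.
  - unfold Ico0; intros; lra.
Qed.

Lemma G_surj c : no_point_masses mu -> 0 <= c <= 1 -> exists b, 0 <= b <= 1 /\ G b = c.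
Proof.
  intros Hnp Hc. exists (Q c). split; [apply Q_range|].
  destruct (Q_lub c) as [H1 H2]. pose proof (Q_range c).
  apply Rle_antisym.
  - destruct (Rle_or_lt (G (Q c)) c) as [h|h]; auto. exfalso.
    destruct (Req_dec (Q c) 0) as [e|ne].
    { rewrite e, G0 in h. lra. }
    destruct (G_lc (Q c) (G (Q c) - c)) as [t [Ht1 Ht2]]; try lra.
    assert (~ is_upper_bound (Sset c) t).
    { intro hu. specialize (H2 t hu). lra. }
    apply H0. intros s [Hs1 [Hs2|Hs2]]; [lra|].
    destruct (Rle_or_lt s t) as [l|l]; auto.
    pose proof (G_mono t s (Rlt_le _ _ l)). lra.
  - destruct (Rle_or_lt c (G (Q c))) as [h|h]; auto. exfalso.
    destruct (Req_dec (Q c) 1) as [e|ne].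
    { rewrite e, G1 in h; auto; lra. }
    destruct (G_rc (Q c) (c - G (Q c))) as [t [Ht1 Ht2]]; auto; try lra.
    assert (t <= Q c); [|lra].
    apply H1. split; [lra|right; lra].
Qed.

End M.

Lemma count_eq (x v : nat -> R) b c N :
  (forall i, (1 <= i <= N)%nat -> 0 <= x i /\ 0 <= v i /\ (x i < b <-> v i < c)) ->
  count_Ico0 x b N = count_Ico0 v c N.
Proof.
  induction N as [|N IH]; intro H; simpl; auto.
  rewrite IH by (intros i hi; apply H; lia).
  destruct (H (S N)) as [h1 [h2 h3]]; [lia|].
  destruct (Rle_dec 0 (x (S N))); [|lra]. destruct (Rle_dec 0 (v (S N))); [|lra].
  destruct (Rlt_dec (x (S N)) b), (Rlt_dec (v (S N)) c); try tauto; lra.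
Qed.

Lemma count_bound x b N : 0 <= count_Ico0 x b N <= INR N.
Proof.
  induction N as [|N IH]; [simpl; lra|]. cbn [count_Ico0]. rewrite S_INR.
  destruct (Rle_dec 0 (x (S N))); [destruct (Rlt_dec (x (S N)) b)|]; lra.
Qed.

Lemma emp_range x N b : (1 <= N)%nat -> 0 <= empirical_Ico0 x N b <= 1.
Proof.
  intro HN. unfold empirical_Ico0. pose proof (count_bound x b N).
  assert (Hp : 0 < INR N) by (apply lt_0_INR; lia).
  split.
  - apply Rmult_le_pos; [apply Rlt_le, Rinv_0_lt_compat|]; lra.
  - apply (Rmult_le_reg_l (INR N)); auto. rewrite <- Rmult_assoc, Rinv_r by lra. lra.
Qed.

Lemma le_ext_trans i N M : (i <= N)%nat -> le_ext N M -> le_ext i M.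
Proof. destruct M; simpl; auto; lia. Qed.

Theorem lemma3p3 (mu : (R -> Prop) -> R) (M : option nat) (v : nat -> R) :
  borel_prob_01 mu ->
  (forall k, in_index_range k M -> 0 <= v k <= 1) ->
  exists x : nat -> R,
    (forall k, in_index_range k M -> 0 <= x k <= 1) /\
    (forall N : nat, (2 <= N)%nat -> le_ext N M ->
       exists d1 d2,
         is_star_discrepancy (fun b => mu (Ico0 b)) (empirical_Ico0 x N) d1 /\
         is_star_discrepancy lambda1_Ico0 (empirical_Ico0 v N) d2 /\
         d1 <= d2) /\
    (no_point_masses mu ->
     forall N : nat, (2 <= N)%nat -> le_ext N M ->
       exists d,
         is_star_discrepancy (fun b => mu (Ico0 b)) (empirical_Ico0 x N) d /\
         is_star_discrepancy lambda1_Ico0 (empirical_Ico0 v N) d).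
Proof.
  intros Hmu Hv. set (x := fun k => Q mu (v k)).
  assert (Hkey : forall N b, le_ext N M -> 0 <= b <= 1 ->
            empirical_Ico0 x N b = empirical_Ico0 v N (G mu b)).
  { intros N b HN Hb. unfold empirical_Ico0. f_equal. apply count_eq.
    intros i Hi. assert (Hr : in_index_range i M).
    { split; [lia|]. apply (le_ext_trans i N); [lia|auto]. }
    specialize (Hv i Hr). unfold x. split; [apply Q_range|]. split; [lra|].
    apply Q_key; auto; lra. }
  assert (Hd2 : forall N, (2 <= N)%nat -> le_ext N M ->
     exists d2, is_star_discrepancy lambda1_Ico0 (empirical_Ico0 v N) d2 /\
       (forall b, 0 <= b <= 1 -> Rabs (mu (Ico0 b) - empirical_Ico0 x N b) <= d2)).
  { intros N HN HM.
    destruct (completeness (fun r => exists b, 0 <= b <= 1 /\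
                 r = Rabs (lambda1_Ico0 b - empirical_Ico0 v N b))) as [d2 Hd2].
    - exists 1. intros r [b [Hb ->]]. pose proof (emp_range v N b ltac:(lia)).
      unfold lambda1_Ico0. apply Rabs_le; lra.
    - exists (Rabs (lambda1_Ico0 0 - empirical_Ico0 v N 0)). exists 0; split; [lra|auto].
    - exists d2; split; auto. intros b Hb. apply (proj1 Hd2).
      exists (G mu b). split; [split; [apply G_nonneg|apply G_le1]; auto; lra|].
      rewrite Hkey by auto. reflexivity. }
  exists x. split; [intros; apply Q_range|]. split.
  - intros N HN HM. destruct (Hd2 N HN HM) as [d2 [Hl Hb]].
    destruct (completeness (fun r => exists b, 0 <= b <= 1 /\
                 r = Rabs (mu (Ico0 b) - empirical_Ico0 x N b))) as [d1 Hd1].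
    + exists d2. intros r [b [Hb' ->]]. auto.
    + exists (Rabs (mu (Ico0 0) - empirical_Ico0 x N 0)). exists 0; split; [lra|auto].
    + exists d1, d2. split; auto. split; auto. apply Hd1. intros r [b [Hb' ->]]. auto.
  - intros Hnp N HN HM. destruct (Hd2 N HN HM) as [d2 [Hl Hb]].
    exists d2. split; auto. split.
    + intros r [b [Hb' ->]]. auto.
    + intros u Hu. apply (proj2 Hl). intros r [c [Hc ->]].
      destruct (G_surj mu Hmu c Hnp Hc) as [b [Hb' Hg]].
      apply Hu. exists b. split; auto. rewrite Hkey by auto. rewrite <- Hg. reflexivity.
Qed.
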